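(* Let $\mathbb{P} = \mathbb{P}(1,1,2,5)$, let $H$ be the group of degree-preserving $\mathbb{C}$-algebra automorphisms of the graded ring $\mathbb{C}[x,y,z,w]$ (with $\deg x=\deg y=1$, $\deg z=2$, $\deg w=5$), so that $\mathrm{Aut}(\mathbb{P}) \cong H/\mathbb{C}^*$, where $\lambda \in \mathbb{C}^*$ acts by $(x,y,z,w)\mapsto(\lambda x,\lambda y,\lambda^2 z,\lambda^5 w)$. Let $G \leq \mathrm{Aut}(\mathbb{P})$ be a finite subgroup. Then for every $\psi \in G$ and every $\phi \in H$ mapping to $\psi$, one has \[ \phi(w) = \alpha w,\quad \phi(z) = \beta z,\quad \phi(x) = ax+cy,\quad \phi(y) = bx+dy \] for some $\alpha,\beta \in \mathbb{C}^*$ and some matrix $A = \begin{pmatrix} a & b\\ c & d\end{pmatrix} \in GL_2(\mathbb{C})$ which is diagonalizable. *)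

(* Defs.v *)
From HB Require Import structures.
From mathcomp Require Import all_boot all_algebra.
From mathcomp Require Import Rstruct.
From mathcomp Require Import complex.
From mathcomp Require Import mpoly.
Set Implicit Arguments. Unset Strict Implicit. Unset Printing Implicit Defensive.
Import GRing.Theory Num.Theory.
Local Open Scope ring_scope.

Definition C : numClosedFieldType := (Rdefinitions.R)[i].

(* The polynomial ring C[x,y,z,w] = C['X_0,'X_1,'X_2,'X_3]. *)
Definition Pol := {mpoly C[4]}.

Definition wt (i : 'I_4) : nat :=
  match val i with 0 => 1 | 1 => 1 | 2 => 2 | _ => 5 end%N.

Definition wdeg (m : 'X_{1..4}) : nat := (\sum_(i < 4) wt i * m i)%N.

(* p is homogeneous of weighted degree d (0 is homogeneous of every degree) *)
Definition whomog (d : nat) (p : Pol) : Prop :=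
  forall m, m \in msupp p -> wdeg m = d.

Definition is_Calg_morph (f : Pol -> Pol) : Prop :=
  [/\ forall (a : C) (p q : Pol), f (a *: p + q) = a *: f p + f q,
      forall p q : Pol, f (p * q) = f p * f q
    & f 1 = 1].

Definition inH (f : Pol -> Pol) : Prop :=
  [/\ is_Calg_morph f, bijective f
    & forall (d : nat) (p : Pol), whomog d p -> whomog d (f p)].

Definition lam_act (l : C) : Pol -> Pol :=
  comp_mpoly [tuple l *: 'X_0; l *: 'X_1; l ^+ 2 *: 'X_2; l ^+ 5 *: 'X_3].

(* A finite subgroup G of Aut(P) = H / C^* is encoded by its preimage
   Ghat in H: a subgroup of H containing C^* with finitely many cosets
   modulo C^*. *)
Definition finite_subgroup_mod_Cstar (Ghat : (Pol -> Pol) -> Prop) : Prop :=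
  [/\ forall f, Ghat f -> inH f,
      forall f g, Ghat f -> Ghat g -> Ghat (f \o g),
      forall f g, Ghat f -> cancel f g -> cancel g f -> Ghat g,
      forall l : C, l != 0 -> Ghat (lam_act l)
    & exists (n : nat) (g : 'I_n -> Pol -> Pol),
        (forall i, Ghat (g i)) /\
        forall f, Ghat f -> exists i (l : C), l != 0 /\ f = g i \o lam_act l].

(* Main.v *)
Require Import Defs.
From HB Require Import structures.
From mathcomp Require Import all_boot all_algebra.
From mathcomp Require Import Rstruct.
From mathcomp Require Import complex.
From mathcomp Require Import mpoly.
From mathcomp Require Import separable.
From mathcomp Require Import zify ring.
From Stdlib Require Import ClassicalEpsilon.
Import GRing.Theory Num.Theory.
Local Open Scope ring_scope.
Set Implicit Arguments. Unset Strict Implicit. Unset Printing Implicit Defensive.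
Ltac sg := match goal with |- ?g => idtac g end.


Lemma morphD (f : Pol -> Pol) (hf : is_Calg_morph f) p q : f (p + q) = f p + f q.
Proof. by case: (hf) => fl _ _; rewrite -[p]scale1r fl !scale1r. Qed.

Lemma morph0 (f : Pol -> Pol) (hf : is_Calg_morph f) : f 0 = 0.
Proof.
have h := morphD hf 0 0; rewrite addr0 in h.
by apply: (addrI (f 0)); rewrite addr0 -h.
Qed.

Lemma morphZ (f : Pol -> Pol) (hf : is_Calg_morph f) a p : f (a *: p) = a *: f p.
Proof. by case: (hf) => fl _ _; rewrite -[a *: p]addr0 fl (morph0 hf) addr0. Qed.

Lemma morphM (f : Pol -> Pol) (hf : is_Calg_morph f) p q : f (p * q) = f p * f q.
Proof. by case: hf. Qed.

Lemma morph1 (f : Pol -> Pol) (hf : is_Calg_morph f) : f 1 = 1.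
Proof. by case: hf. Qed.

Lemma morph_sum (f : Pol -> Pol) (hf : is_Calg_morph f) (I : Type) (r : seq I) (P : pred I) (F : I -> Pol) :
  f (\sum_(i <- r | P i) F i) = \sum_(i <- r | P i) f (F i).
Proof. exact: (big_morph f (morphD hf) (morph0 hf)). Qed.

Lemma morph_prod (f : Pol -> Pol) (hf : is_Calg_morph f) (I : Type) (r : seq I) (P : pred I) (F : I -> Pol) :
  f (\prod_(i <- r | P i) F i) = \prod_(i <- r | P i) f (F i).
Proof. exact: (big_morph f (morphM hf) (morph1 hf)). Qed.

Lemma morphX (f : Pol -> Pol) (hf : is_Calg_morph f) p k : f (p ^+ k) = f p ^+ k.
Proof. by elim: k => [|k IH]; rewrite ?expr0 ?(morph1 hf) // !exprS (morphM hf) IH. Qed.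

Lemma morph_comp (f : Pol -> Pol) (hf : is_Calg_morph f) p : f p = p \mPo [tuple f 'X_i | i < 4].
Proof.
rewrite {1}[p]mpolyE comp_mpolyEX (morph_sum hf); apply: eq_bigr => m _.
rewrite (morphZ hf) comp_mpolyX mpolyXE_id (morph_prod hf); congr (_ *: _).
by apply: eq_bigr => i _; rewrite (morphX hf) tnth_mktuple.
Qed.

Lemma wdegU (i : 'I_4) : wdeg U_(i) = wt i.
Proof.
rewrite /wdeg (bigD1 i) //= mnm1E eqxx muln1 big1 ?addn0 // => j /negbTE.
by rewrite mnm1E eq_sym => ->; rewrite muln0.
Qed.

Lemma wdegD m1 m2 : wdeg (m1 + m2)%MM = (wdeg m1 + wdeg m2)%N.
Proof. by rewrite /wdeg -big_split; apply: eq_bigr => i _; rewrite mnmDE mulnDr. Qed.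

Lemma wdeg0 : wdeg 0%MM = 0%N.
Proof. by rewrite /wdeg big1 // => i _; rewrite mnm0E muln0. Qed.

Lemma whomog0 d : whomog d 0.
Proof. by move=> m; rewrite msupp0. Qed.

Lemma whomogD d p q : whomog d p -> whomog d q -> whomog d (p + q).
Proof. by move=> hp hq m /msuppD_le; rewrite mem_cat => /orP[/hp|/hq]. Qed.

Lemma whomogZ d a p : whomog d p -> whomog d (a *: p).
Proof. by move=> hp m /msuppZ_le /hp. Qed.

Lemma whomogN d p : whomog d p -> whomog d (- p).
Proof. by move=> hp; rewrite -scaleN1r; apply: whomogZ. Qed.

Lemma whomogB d p q : whomog d p -> whomog d q -> whomog d (p - q).
Proof. by move=> hp hq; apply: whomogD => //; apply: whomogN. Qed.

Lemma whomog_sum d (I : Type) (r : seq I) (P : pred I) (F : I -> Pol) :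
  (forall i, P i -> whomog d (F i)) -> whomog d (\sum_(i <- r | P i) F i).
Proof.
move=> h; apply: (big_ind (whomog d)) => //; first exact: whomog0.
exact: whomogD.
Qed.

Lemma whomog1 : whomog 0 1.
Proof. by move=> m; rewrite msupp1 inE => /eqP ->; rewrite wdeg0. Qed.

Lemma whomogM a b p q : whomog a p -> whomog b q -> whomog (a + b) (p * q).
Proof.
move=> hp hq m /msuppM_le /allpairsP [[m1 m2] [/= h1 h2 ->]].
by rewrite wdegD (hp _ h1) (hq _ h2).
Qed.

Lemma whomogX a p k : whomog a p -> whomog (a * k) (p ^+ k).
Proof.
move=> hp; elim: k => [|k IH]; first by rewrite muln0 expr0; exact: whomog1.
by rewrite exprS mulnS; apply: whomogM.
Qed.

Lemma whomogXU (i : 'I_4) : whomog (wt i) 'X_i.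
Proof. by move=> m; rewrite msuppX inE => /eqP ->; rewrite wdegU. Qed.

Lemma whomog_comp (t : 4.-tuple Pol) d p :
  (forall i, whomog (wt i) (tnth t i)) -> whomog d p -> whomog d (p \mPo t).
Proof.
move=> ht hp; rewrite comp_mpolyE big_seq; apply: whomog_sum => m /hp <-.
apply: whomogZ; rewrite /wdeg.
apply: (big_rec2 (fun d q => whomog d q)); first exact: whomog1.
by move=> i d' q _ hq; apply: whomogM => //; apply: whomogX.
Qed.

Lemma whomog_coef0 d p m : whomog d p -> wdeg m != d -> p@_m = 0.
Proof.
move=> hp hm; apply: memN_msupp_eq0; apply/negP => /hp /eqP.
by rewrite (negbTE hm).
Qed.

Lemma sum4 (F : 'I_4 -> nat) : \sum_(i < 4) F i = (F 0%R + F 1%R + F 2%R + F 3%R)%N.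
Proof.
rewrite !big_ord_recl big_ord0 addr0 !addrA.
by congr (_ + _ + _ + _)%N; congr F; apply: val_inj.
Qed.

Lemma wdegE m : wdeg m = (m 0%R + m 1%R + 2 * m 2%R + 5 * m 3%R)%N.
Proof. by rewrite /wdeg sum4 /= !mul1n. Qed.

Lemma mnm4P (m m' : 'X_{1..4}) :
  m 0 = m' 0 -> m 1 = m' 1 -> m 2 = m' 2 -> m 3 = m' 3 -> m = m'.
Proof.
move=> h0 h1 h2 h3; apply/mnmP; case=> [[|[|[|[|i]]]] Hi] //.
- by have -> : Ordinal Hi = 0 by apply: val_inj.
- by have -> : Ordinal Hi = 1 by apply: val_inj.
- by have -> : Ordinal Hi = 2 by apply: val_inj.
- by have -> : Ordinal Hi = 3 by apply: val_inj.
Qed.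

Lemma mon1 m : wdeg m = 1%N -> m = U_(0%R)%MM \/ m = U_(1%R)%MM.
Proof.
rewrite wdegE => h.
have h2 : m 2 = 0%N by lia.
have h3 : m 3 = 0%N by lia.
have [[a b]|[a b]] : (m 0%R = 1 /\ m 1%R = 0 \/ m 0%R = 0 /\ m 1%R = 1)%N by lia.
- by left; apply: mnm4P; rewrite mnm1E ?a ?b ?h2 ?h3.
- by right; apply: mnm4P; rewrite mnm1E ?a ?b ?h2 ?h3.
Qed.

Lemma U01 : U_(0%R : 'I_4)%MM != U_(1%R)%MM.
Proof. by apply/eqP => /mnmP /(_ 0); rewrite !mnm1E. Qed.

Lemma deg1E p : whomog 1 p -> p = p@_U_(0%R)%MM *: 'X_0 + p@_U_(1%R)%MM *: 'X_1.
Proof.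
move=> hp; apply/mpolyP => m; rewrite mcoeffD !mcoeffZ !mcoeffX.
case: (eqVneq m U_(0%R)%MM) => [->|n0].
  by rewrite ?eqxx eq_sym (negbTE U01) mulr1 mulr0 addr0.
case: (eqVneq m U_(1%R)%MM) => [->|n1].
  by rewrite mulr1 mulr0 add0r.
rewrite !mulr0 addr0.
apply: (whomog_coef0 hp); apply/eqP => /mon1 [] e; [move: n0|move: n1]; by rewrite e eqxx.
Qed.

Lemma wt_gt0 i : (0 < wt i)%N.
Proof. by case: i => [[|[|[|[|i]]]] Hi]. Qed.

Lemma coefUk (k : 'I_4) (p : Pol) : p@_U_(k)%MM = (p^`M(k))@_0.
Proof. by rewrite mcoeff_mderiv mnm0E add0m. Qed.

Definition Gk (k : 'I_4) (x : Pol) := x@_0%MM = 0 /\ x@_U_(k)%MM = 0.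

Lemma GkM k x y : Gk k x -> Gk k (x * y).
Proof.
case=> h0 h1; split; first by rewrite (mcoeff0_is_multiplicative _ _).1 h0 mul0r.
rewrite coefUk mderivM mcoeffD !(mcoeff0_is_multiplicative _ _).1 -!coefUk.
by rewrite h0 h1 !mul0r addr0.
Qed.

Lemma key (k : 'I_4)
  (Hk : forall m, wdeg m = wt k -> (m k != 0)%N -> m = U_(k)%MM)
  (Hw : forall i, i != k -> wt i != wt k) f p : is_Calg_morph f ->
  (forall d q, whomog d q -> whomog d (f q)) ->
  whomog (wt k) p -> p@_U_(k)%MM = 0 -> (f p)@_U_(k)%MM = 0.
Proof.
move=> hf hg hp hpk; rewrite (morph_comp hf) comp_mpolyE raddf_sum /=.
rewrite big_seq big1 // => m hm; rewrite mcoeffZ.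
have hdm := hp m hm.
have mk : m != U_(k)%MM by apply: contraTneq hm => ->; rewrite mcoeff_msupp hpk eqxx.
have mk0 : m k = 0%N.
  by apply/eqP; apply: contraNT mk => /(Hk _ hdm) ->.
case: (pickP (fun i => m i != 0%N)) => [i hi|h0]; last first.
  have : m = 0%MM by apply/mnmP => i; rewrite mnm0E; move: (h0 i) => /= /negbFE /eqP.
  by move=> e; move: hdm; rewrite e wdeg0 => /esym/eqP; rewrite eqn0Ngt wt_gt0.
have ik : i != k by apply: contraNneq hi => ->; rewrite mk0.
rewrite (bigD1 i) //= tnth_mktuple -(prednK (n := m i)) ?lt0n // exprS -mulrA.
have ht := hg _ _ (@whomogXU i).
have hG : Gk k (f 'X_i).
  split; first by apply: (whomog_coef0 ht); rewrite wdeg0 eq_sym -lt0n; exact: wt_gt0.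
  by apply: (whomog_coef0 ht); rewrite wdegU eq_sym; exact: Hw.
by rewrite (proj2 (GkM _ hG)) mulr0.
Qed.

Lemma ord4_ind (P : 'I_4 -> Prop) : P 0 -> P 1 -> P 2 -> P 3 -> forall i, P i.
Proof.
move=> p0 p1 p2 p3; case=> [[|[|[|[|i]]]] Hi] //.
- by have -> : Ordinal Hi = 0 by apply: val_inj.
- by have -> : Ordinal Hi = 1 by apply: val_inj.
- by have -> : Ordinal Hi = 2 by apply: val_inj.
- by have -> : Ordinal Hi = 3 by apply: val_inj.
Qed.

Lemma comp_morph (t : 4.-tuple Pol) : is_Calg_morph (comp_mpoly t).
Proof.
split; first by move=> a p q; rewrite comp_mpolyD comp_mpolyZ.
  exact: (comp_mpoly_is_multiplicative t).1.
exact: comp_mpoly1.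
Qed.

Lemma morph_o f g : is_Calg_morph f -> is_Calg_morph g -> is_Calg_morph (f \o g).
Proof.
move=> hf hg; split => /=.
- by move=> a p q; rewrite (morphD hg) (morphZ hg) (morphD hf) (morphZ hf).
- by move=> p q; rewrite (morphM hg) (morphM hf).
- by rewrite (morph1 hg) (morph1 hf).
Qed.

Lemma comp_comp (t1 t2 : 4.-tuple Pol) p :
  comp_mpoly t1 (comp_mpoly t2 p) = p \mPo [tuple comp_mpoly t1 (tnth t2 i) | i < 4].
Proof.
have hf := morph_o (comp_morph t1) (comp_morph t2).
transitivity ((comp_mpoly t1 \o comp_mpoly t2) p); first by [].
rewrite (morph_comp hf p). apply: (congr1 (fun t => comp_mpoly t p)).
apply: eq_mktuple => i.
change (comp_mpoly t1 (comp_mpoly t2 'X_i) = comp_mpoly t1 (tnth t2 i)).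
by rewrite comp_mpolyXU -tnth_nth.
Qed.

Lemma comp_eq (t t' : 4.-tuple Pol) (p : Pol) :
  (forall m, m \in msupp p -> forall i, (m i != 0)%N -> tnth t i = tnth t' i) ->
  p \mPo t = p \mPo t'.
Proof.
move=> h; rewrite !comp_mpolyE big_seq [RHS]big_seq; apply: eq_bigr => m hm.
congr (_ *: _); apply: eq_bigr => i _.
by case: (eqVneq (m i) 0%N) => [->|hi]; rewrite ?expr0 // (h m hm i hi).
Qed.

Lemma comp_fix (t : 4.-tuple Pol) (p : Pol) :
  (forall m, m \in msupp p -> forall i, (m i != 0)%N -> tnth t i = 'X_i) ->
  p \mPo t = p.
Proof.
move=> h; rewrite -[RHS](comp_mpoly_id p); apply: comp_eq => m hm i hi.
by rewrite tnth_mktuple (h m hm i hi).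
Qed.

Definition lamt (l : C) : 4.-tuple Pol :=
  [tuple l *: 'X_0; l *: 'X_1; l ^+ 2 *: 'X_2; l ^+ 5 *: 'X_3].

Lemma lamE l p : lam_act l p = p \mPo lamt l.
Proof. by []. Qed.

Lemma tnth_lam l i : tnth (lamt l) i = l ^+ wt i *: 'X_i.
Proof. by elim/ord4_ind: i; rewrite /= ?expr1. Qed.

Lemma lam_hom l d p : whomog d p -> lam_act l p = l ^+ d *: p.
Proof.
move=> hp; rewrite lamE comp_mpolyE [in RHS](mpolyE p) scaler_sumr big_seq [RHS]big_seq.
apply: eq_bigr => m hm; rewrite scalerA mulrC -scalerA; congr (_ *: _).
rewrite mpolyXE_id -(hp m hm) /wdeg -prodrXr -scaler_prod; apply: eq_bigr => i _.
by rewrite tnth_lam exprZn exprM.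
Qed.

Lemma lam_X l i : lam_act l 'X_i = l ^+ wt i *: 'X_i.
Proof. by rewrite lamE comp_mpolyXU -tnth_nth tnth_lam. Qed.

Definition pb (P : Prop) : bool := if excluded_middle_informative P then true else false.
Lemma pbP P : reflect P (pb P).
Proof. by rewrite /pb; case: excluded_middle_informative => h; [left|right]. Qed.

Definition alpha (k : 'I_4) (f : Pol -> Pol) := (f 'X_k)@_U_(k)%MM.

Definition graded (f : Pol -> Pol) := forall d q, whomog d q -> whomog d (f q).

Lemma mcoeffXUk (k : 'I_4) : ('X_k : Pol)@_U_(k)%MM = 1.
Proof. by rewrite mcoeffXU eqxx. Qed.

Lemma alpha_mul (k : 'I_4)
  (Hk : forall m, wdeg m = wt k -> (m k != 0)%N -> m = U_(k)%MM)
  (Hw : forall i, i != k -> wt i != wt k) f h :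
  is_Calg_morph f -> graded f -> is_Calg_morph h -> graded h ->
  alpha k (f \o h) = alpha k f * alpha k h.
Proof.
move=> hf gf hh gh; rewrite /alpha /=.
have hr : whomog (wt k) (h 'X_k - alpha k h *: 'X_k).
  by apply: whomogB; [apply: gh; apply: whomogXU | apply: whomogZ; apply: whomogXU].
have r0 : (h 'X_k - alpha k h *: 'X_k)@_U_(k)%MM = 0.
  by rewrite mcoeffB mcoeffZ mcoeffXUk mulr1 /alpha subrr.
have e : h 'X_k = alpha k h *: 'X_k + (h 'X_k - alpha k h *: 'X_k).
  by rewrite addrC subrK.
rewrite [in LHS]e.
rewrite (morphD hf) (morphZ hf) mcoeffD mcoeffZ (key Hk Hw hf gf hr r0) addr0.
by rewrite mulrC.
Qed.

Lemma eigen (k : 'I_4)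
  (Hk : forall m, wdeg m = wt k -> (m k != 0)%N -> m = U_(k)%MM)
  (Hw : forall i, i != k -> wt i != wt k) Ghat :
  finite_subgroup_mod_Cstar Ghat ->
  exists w : Pol, [/\ whomog (wt k) w, w@_U_(k)%MM = 1 &
     forall phi, Ghat phi -> exists2 a : C, a != 0 & phi w = a *: w].
Proof.
case=> hH hcomp hinv hlam [n [g [hg hcov]]].
have mg f : Ghat f -> is_Calg_morph f /\ graded f.
  by move=> /hH [] ? _ ?.
have anz f : Ghat f -> alpha k f != 0.
  move=> hf; case: (hH f hf) => mf [fi c1 c2] gf.
  have hfi : Ghat fi := hinv f fi hf c1 c2.
  have [mfi gfi] := mg _ hfi.
  have : alpha k (f \o fi) = 1 by rewrite /alpha /= c2 mcoeffXUk.
  rewrite (alpha_mul Hk Hw mf gf mfi gfi) => e; apply/eqP => a0.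
  by move: e; rewrite a0 mul0r => /eqP; rewrite eq_sym oner_eq0.
pose Sr i j := exists c : C, c != 0 /\ g i 'X_k = c *: g j 'X_k.
pose Sb i j := pb (Sr i j).
have Srefl i : Sr i i by exists 1; rewrite oner_eq0 scale1r.
have Ssym i j : Sr i j -> Sr j i.
  case=> c [c0 e]; exists c^-1; split; first by rewrite invr_eq0.
  by rewrite e scalerA mulVf // scale1r.
have Strans i j l : Sr i j -> Sr j l -> Sr i l.
  case=> c [c0 e] [c' [c0' e']]; exists (c * c'); split; first by rewrite mulf_neq0.
  by rewrite e e' scalerA.
pose rho i := arg_min i (fun j => Sb j i) (fun j : 'I_n => val j).
have rhoS i : Sr (rho i) i.
  rewrite /rho; case: (@arg_minnP _ i (fun j => Sb j i) (fun j => val j) (introT (pbP _) (Srefl i))).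
  by move=> a /pbP.
have rho_eq i i' : Sr i i' -> rho i = rho i'.
  move=> sii; rewrite /rho.
  case: (@arg_minnP _ i (fun j => Sb j i) (fun j => val j) (introT (pbP _) (Srefl i))).
  move=> a /pbP Sa mina.
  case: (@arg_minnP _ i' (fun j => Sb j i') (fun j => val j) (introT (pbP _) (Srefl i'))).
  move=> b /pbP Sb' minb.
  apply: val_inj; apply/eqP; rewrite eqn_leq; apply/andP; split.
    by apply: mina; apply/pbP; apply: Strans Sb' (Ssym _ _ sii).
  by apply: minb; apply/pbP; apply: Strans Sa sii.
have rhorho i : rho (rho i) = rho i by apply: rho_eq; apply: rhoS.
pose R := [set rho i | i in 'I_n].
have rhoR j : j \in R -> rho j = j by case/imsetP => i _ ->; apply: rhorho.
have [i0 _] : exists i : 'I_n, True.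
  by have [i [l _]] := hcov _ (hlam 1 (oner_neq0 _)); exists i.
have hR : (0 < #|R|)%N by apply/card_gt0P; exists (rho i0); apply: imset_f.
pose F j := (alpha k (g j))^-1 *: g j 'X_k.
pose w0 := \sum_(j in R) F j.
exists ((#|R|%:R)^-1 *: w0); split.
- apply: whomogZ; apply: whomog_sum => j _; apply: whomogZ.
  by have [_ gj] := mg _ (hg j); apply: gj; apply: whomogXU.
- rewrite mcoeffZ raddf_sum /= (eq_bigr (fun _ => 1)).
    by rewrite sumr_const mulVf // pnatr_eq0 -lt0n.
  by move=> j _; rewrite mcoeffZ mulVf //; exact: anz.
move=> phi hphi; exists (alpha k phi); first exact: anz.
have [mphi gphi] := mg _ hphi.
have phiinj : injective phi by case: (hH _ hphi) => _ /bij_inj.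
have T j : exists i, exists c : C, c != 0 /\ phi (g j 'X_k) = c *: g i 'X_k.
  have [i [l [l0 e]]] := hcov _ (hcomp _ _ hphi (hg j)).
  exists i, (l ^+ wt k); split; first by rewrite expf_neq0.
  have := congr1 (fun f => f 'X_k) e => /= ->.
  by rewrite lam_X (morphZ (mg _ (hg i)).1).
have [tau htau] := fin_all_exists T.
pose sig j := rho (tau j).
have hsig j : exists2 c : C, c != 0 & phi (g j 'X_k) = c *: g (sig j) 'X_k.
  have [c [c0 e]] := htau j; have [c' [c0' e']] := Ssym _ _ (rhoS (tau j)).
  by exists (c * c'); [rewrite mulf_neq0 | rewrite e e' scalerA].
have sigR j : sig j \in R by apply: imset_f.
have sig_inj : {in R &, injective sig}.
  move=> j1 j2 h1 h2 e; rewrite -(rhoR _ h1) -(rhoR _ h2); apply: rho_eq.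
  have [c1 c10 e1] := hsig j1; have [c2 c20 e2] := hsig j2.
  exists (c1 / c2); split; first by rewrite mulf_neq0 ?invr_eq0.
  by apply: phiinj; rewrite (morphZ mphi) e1 e2 e scalerA divfK.
have imR : sig @: R = R.
  apply/eqP; rewrite eqEcard card_in_imset // leqnn andbT.
  by apply/subsetP => x /imsetP [j _ ->]; exact: sigR.
have eqF j : j \in R -> phi (F j) = alpha k phi *: F (sig j).
  move=> hj; have [c c0 e] := hsig j.
  have [mgj ggj] := mg _ (hg j).
  rewrite /F (morphZ mphi) e !scalerA; congr (_ *: _).
  have ea : alpha k phi * alpha k (g j) = c * alpha k (g (sig j)).
    by rewrite -(alpha_mul Hk Hw mphi gphi mgj ggj) /alpha /= e mcoeffZ.
  have ec : c = alpha k phi * alpha k (g j) / alpha k (g (sig j)).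
    by rewrite ea mulfK //; exact: anz.
  rewrite ec; field; apply/andP; split; exact: anz.
rewrite (morphZ mphi) /w0 (morph_sum mphi) (eq_bigr _ eqF) -scaler_sumr.
rewrite -(big_imset _ sig_inj) /= imR.
by rewrite !scalerA mulrC.
Qed.

Definition w2 (i : 'I_2) : 'I_4 := widen_ord (isT : (2 <= 4)%N) i.

Lemma w20 : w2 0 = 0. Proof. by apply: val_inj. Qed.
Lemma w21 : w2 1 = 1. Proof. by apply: val_inj. Qed.
Lemma wt_w2 j : wt (w2 j) = 1%N.
Proof. by case: j => [[|[|j]] Hj]. Qed.
Lemma w2_eq i j : (w2 i == w2 j) = (i == j).
Proof. by []. Qed.

Definition M (f : Pol -> Pol) : 'M[C]_2 :=
  \matrix_(i < 2, j < 2) (f 'X_(w2 j))@_U_(w2 i)%MM.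

Lemma sum2 (F : 'I_2 -> Pol) : \sum_(i < 2) F i = F 0 + F 1.
Proof.
rewrite !big_ord_recl big_ord0 addr0.
by congr (_ + _); congr F; apply: val_inj.
Qed.

Lemma Mdec f j : graded f -> f 'X_(w2 j) = \sum_(i < 2) M f i j *: 'X_(w2 i).
Proof.
move=> gf; rewrite sum2 !mxE w20 w21; apply: deg1E; apply: gf.
by have := @whomogXU (w2 j); rewrite wt_w2.
Qed.

Lemma Mcomp f h : is_Calg_morph f -> graded h -> M (f \o h) = M f *m M h.
Proof.
move=> hf gh; apply/matrixP => i j; rewrite !mxE /= (Mdec j gh) (morph_sum hf).
rewrite raddf_sum; apply: eq_bigr => l _ /=; rewrite (morphZ hf) mcoeffZ !mxE.
by rewrite mulrC.
Qed.

Lemma Mid : M id = 1%:M.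
Proof. by apply/matrixP => i j; rewrite !mxE mcoeffXU w2_eq eq_sym. Qed.

Lemma M_ext f f' : (forall p, f p = f' p) -> M f = M f'.
Proof. by move=> e; apply/matrixP => i j; rewrite !mxE e. Qed.

Lemma Mlam l : M (lam_act l) = l%:M.
Proof.
apply/matrixP => i j; rewrite !mxE lam_X wt_w2 expr1 mcoeffZ mcoeffXU w2_eq eq_sym.
by rewrite mulr_natr.
Qed.

Lemma graded_iter f d : graded f -> graded (iter d f).
Proof. by move=> gf; elim: d => [|d IH] //= e q hq; apply: gf; apply: IH. Qed.


Lemma Miter f d : is_Calg_morph f -> graded f -> M (iter d f) = M f ^+ d.
Proof.
move=> hf gf; elim: d => [|d IH]; first by rewrite expr0 (_ : 1 = 1%:M) // -Mid; apply: M_ext.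
rewrite exprS -IH; have -> : M f * M (iter d f) = M f *m M (iter d f) by [].
by rewrite -Mcomp //; exact: graded_iter.
Qed.

Lemma lam_lam l l' p : lam_act l (lam_act l' p) = lam_act (l * l') p.
Proof.
rewrite !lamE comp_comp; apply: comp_eq => m _ i _.
by rewrite tnth_mktuple !tnth_lam comp_mpolyZ comp_mpolyXU -tnth_nth tnth_lam scalerA exprMn mulrC.
Qed.

Lemma lam1 p : lam_act 1 p = p.
Proof. by rewrite lamE; apply: comp_fix => m _ i _; rewrite tnth_lam expr1n scale1r. Qed.

Lemma diag_of (A : 'M[C]_2) d l : (0 < d)%N -> l != 0 -> A ^+ d = l%:M ->
  A \in unitmx /\ diagonalizable A.
Proof.
move=> d0 l0 eA; split.
  rewrite unitmxE unitfE; apply: contra l0 => /eqP dA.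
  have : \det (A ^+ d) = \det A ^+ d.
    by elim: (d) => [|e IH]; rewrite ?expr0 ?det1 // !exprS detM IH.
  by rewrite eA det_scalar dA expr0n gtn_eqF //= => /eqP; rewrite expf_eq0.
pose p : {poly C} := 'X^d - l%:P.
have [rs e] := closed_field_poly_normal p.
rewrite lead_coefXnsubC // scale1r in e.
have sep : separable_poly p.
  rewrite unlock /p derivB derivXn derivC subr0 -scaler_nat coprimepZr; last first.
    by rewrite pnatr_eq0 -lt0n.
  apply: coprimep_expr; rewrite coprimepX rootE !hornerE expr0n gtn_eqF //=.
  by rewrite sub0r oppr_eq0.
apply/diagonalizableP; exists rs.
  by rewrite -separable_prod_XsubC -e.
rewrite -e; apply: mxminpoly_min.
by rewrite /p rmorphB /= rmorphXn /= horner_mx_X horner_mx_C eA subrr.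
Qed.

Lemma lam_inv l q : l != 0 -> lam_act l^-1 (lam_act l q) = q.
Proof. by move=> l0; rewrite lam_lam mulVf // lam1. Qed.

Lemma deg1_part Ghat : finite_subgroup_mod_Cstar Ghat ->
  forall phi, Ghat phi -> M phi \in unitmx /\ diagonalizable (M phi).
Proof.
case=> hH hcomp hinv hlam [n [g [hg hcov]]] phi hphi.
have [mphi [phiv c1 c2] gphi] := hH _ hphi.
have Git (a : nat) : Ghat (iter a.+1 phi).
  elim: a => [|a IH]; first exact: hphi.
  exact: (hcomp _ _ hphi IH).
have T (a : 'I_n.+1) : exists i : 'I_n, exists l : C, l != 0 /\ iter a.+1 phi = g i \o lam_act l.
  exact: hcov.
have [c hc] := fin_all_exists T.
have : ~~ injectiveb c.
  by apply/negP => /injectiveP /leq_card; rewrite !card_ord ltnn.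
case/injectivePn => a [b nab eab].
wlog hab : a b nab eab / (a < b)%N.
  move=> W; case: (ltngtP a b) => h; first exact: W h.
    by apply: (W b a) => //; rewrite eq_sym.
  by move: nab; rewrite (val_inj h) eqxx.
have [l1 [l10 e1]] := hc a; have [l2 [l20 e2]] := hc b; rewrite eab in e1.
pose d := (b - a)%N.
have ginj : injective (g (c b)) by case: (hH _ (hg (c b))) => _ /bij_inj.
have ed p : iter d phi p = lam_act (l1^-1 * l2) p.
  have eb : b.+1 = (a.+1 + d)%N by rewrite /d; move: hab; clear; lia.
  have e2p : iter b.+1 phi p = g (c b) (lam_act l2 p) := congr1 (fun f => f p) e2.
  move: e2p; rewrite eb iterD.
  have e1p : iter a.+1 phi (iter d phi p) = g (c b) (lam_act l1 (iter d phi p)).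
    by move: (congr1 (fun f => f (iter d phi p)) e1) => ->.
  move=> e3; rewrite e1p in e3; move/ginj: e3 => e.
  exact: (etrans (esym (lam_inv (iter d phi p) l10))
           (etrans (congr1 (lam_act l1^-1) e) (lam_lam _ _ _))).
have : M phi ^+ d = (l1^-1 * l2)%:M by rewrite -Miter // (M_ext ed) Mlam.
by apply: diag_of; [rewrite subn_gt0 | rewrite mulf_neq0 ?invr_eq0].
Qed.

Lemma Hk2 m : wdeg m = wt 2 -> (m 2%R != 0)%N -> m = U_(2)%MM.
Proof.
rewrite wdegE (_ : wt 2 = 2%N) // => hd h2; apply: mnm4P; rewrite !mnm1E /=; lia.
Qed.

Lemma Hk3 m : wdeg m = wt 3 -> (m 3%R != 0)%N -> m = U_(3)%MM.
Proof.
rewrite wdegE (_ : wt 3 = 5%N) // => hd h2; apply: mnm4P; rewrite !mnm1E /=; lia.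
Qed.

Lemma Hw2 i : i != 2 -> wt i != wt 2.
Proof. by elim/ord4_ind: i. Qed.

Lemma Hw3 i : i != 3 -> wt i != wt 3.
Proof. by elim/ord4_ind: i. Qed.

Lemma notU k (q : Pol) m : q@_U_(k)%MM = 0 -> m \in msupp q -> m != U_(k)%MM.
Proof. by move=> h0 hm; apply: contraTneq hm => ->; rewrite mcoeff_msupp h0 eqxx. Qed.

Lemma supp2 q : whomog 2 q -> q@_U_(2)%MM = 0 -> forall m, m \in msupp q ->
  forall i, (m i != 0)%N -> (i == 0) || (i == 1).
Proof.
move=> hq h0 m hm; have hd := hq m hm; have mU := notU h0 hm.
have m2 : m 2 = 0%N by apply/eqP; apply: contraNT mU => /(Hk2 hd) ->.
rewrite wdegE in hd; have m3 : m 3 = 0%N by lia.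
by elim/ord4_ind; rewrite ?m2 ?m3.
Qed.

Lemma supp3 q : whomog 5 q -> q@_U_(3)%MM = 0 -> forall m, m \in msupp q ->
  forall i, (m i != 0)%N -> (i == 0) || (i == 1) || (i == 2).
Proof.
move=> hq h0 m hm; have hd := hq m hm; have mU := notU h0 hm.
have m3 : m 3 = 0%N by apply/eqP; apply: contraNT mU => /(Hk3 hd) ->.
by elim/ord4_ind; rewrite ?m3.
Qed.

Lemma compX (t : 4.-tuple Pol) i : 'X_i \mPo t = tnth t i.
Proof. by rewrite comp_mpolyXU -tnth_nth. Qed.

Lemma tn0 (a b c d : Pol) : tnth [tuple a; b; c; d] 0 = a. Proof. by []. Qed.
Lemma tn1 (a b c d : Pol) : tnth [tuple a; b; c; d] 1 = b. Proof. by []. Qed.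
Lemma tn2 (a b c d : Pol) : tnth [tuple a; b; c; d] 2 = c. Proof. by []. Qed.
Lemma tn3 (a b c d : Pol) : tnth [tuple a; b; c; d] 3 = d. Proof. by []. Qed.

Unset Implicit Arguments.
Theorem proposition2p3 (Ghat : (Pol -> Pol) -> Prop) :
  finite_subgroup_mod_Cstar Ghat ->
  exists theta : Pol -> Pol, inH theta /\
    forall phi : Pol -> Pol, Ghat phi ->
      exists (alpha beta : C) (A : 'M[C]_2),
        [/\ alpha != 0, beta != 0, A \in unitmx & diagonalizable A] /\
        [/\ phi (theta 'X_3) = alpha *: theta 'X_3,
            phi (theta 'X_2) = beta *: theta 'X_2,
            phi (theta 'X_0) = A 0 0 *: theta 'X_0 + A 1 0 *: theta 'X_1
          & phi (theta 'X_1) = A 0 1 *: theta 'X_0 + A 1 1 *: theta 'X_1].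
Proof.
move=> hG.
have [zz [hz cz ez]] := eigen Hk2 Hw2 hG.
have [ww [hw cw ew]] := eigen Hk3 Hw3 hG.
have [q2 eq2] : exists q2 : Pol, zz = 'X_2 + q2 by exists (zz - 'X_2); rewrite addrC subrK.
have [q3 eq3] : exists q3 : Pol, ww = 'X_3 + q3 by exists (ww - 'X_3); rewrite addrC subrK.
have eq2' : q2 = zz - 'X_2 by rewrite eq2 addrAC subrr add0r.
have eq3' : q3 = ww - 'X_3 by rewrite eq3 addrAC subrr add0r.
have hq2 : whomog 2 q2 by rewrite eq2'; apply: whomogB => //; apply: (@whomogXU 2).
have hq3 : whomog 5 q3 by rewrite eq3'; apply: whomogB => //; apply: (@whomogXU 3).
have q2c : q2@_U_(2)%MM = 0 by rewrite eq2' mcoeffB cz mcoeffXUk subrr.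
have q3c : q3@_U_(3)%MM = 0 by rewrite eq3' mcoeffB cw mcoeffXUk subrr.
have s2 := supp2 hq2 q2c.
have s3 := supp3 hq3 q3c.
have [t et] : exists t : 4.-tuple Pol, t = [tuple 'X_0; 'X_1; zz; ww] by eexists.
have fix2 (u : 4.-tuple Pol) : tnth u 0 = 'X_0 -> tnth u 1 = 'X_1 -> q2 \mPo u = q2.
  move=> u0 u1; apply: comp_fix => m hm i hi.
  by case/orP: (s2 m hm i hi) => /eqP ->.
have th2 : comp_mpoly t ('X_2 - q2) = 'X_2.
  by rewrite comp_mpolyB compX fix2 et ?tn0 ?tn1 // tn2 eq2 addrK.
pose s : 4.-tuple Pol := [tuple 'X_0; 'X_1; 'X_2 - q2; 'X_3].
have [q3' eq3''] : exists q3', q3' = q3 \mPo s by eexists.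
have [tinv etinv] : exists t' : 4.-tuple Pol, t' = [tuple 'X_0; 'X_1; 'X_2 - q2; 'X_3 - q3'] by eexists.
exists (comp_mpoly t); split.
  split; first exact: comp_morph.
    exists (comp_mpoly tinv) => p.
      rewrite comp_comp; apply: comp_fix => m _ i _; rewrite tnth_mktuple.
      rewrite et; elim/ord4_ind: i.
      - by rewrite tn0 compX etinv tn0.
      - by rewrite tn1 compX etinv tn1.
      - by rewrite tn2 eq2 comp_mpolyD compX fix2 etinv ?tn0 ?tn1 // tn2 subrK.
      - rewrite tn3 eq3 comp_mpolyD compX etinv tn3 (comp_eq (p := q3) (t' := s)).
          by rewrite -eq3'' subrK.
        move=> m' hm' i' hi'; case/orP: (s3 m' hm' i' hi') => [/orP [] |] /eqP -> //.
    rewrite comp_comp; apply: comp_fix => m _ i _; rewrite tnth_mktuple.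
    rewrite etinv; elim/ord4_ind: i.
    - by rewrite tn0 compX et tn0.
    - by rewrite tn1 compX et tn1.
    - by rewrite tn2 th2.
    - rewrite tn3 comp_mpolyB compX eq3'' comp_comp (comp_fix (p := q3)).
        by rewrite et tn3 eq3 addrK.
      move=> m' hm' i' hi'; rewrite tnth_mktuple.
      case/orP: (s3 m' hm' i' hi') => [/orP [] |] /eqP ->.
      + by rewrite tn0 compX et tn0.
      + by rewrite tn1 compX et tn1.
      + by rewrite tn2.
  move=> d p hp; apply: whomog_comp => // i; rewrite et; elim/ord4_ind: i.
  - by rewrite tn0; apply: (@whomogXU 0).
  - by rewrite tn1; apply: (@whomogXU 1).
  - by rewrite tn2.
  - by rewrite tn3.
move=> phi hphi.
have [b b0 eb] := ez _ hphi.
have [a a0 ea] := ew _ hphi.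
have [uA dA] := deg1_part hG hphi.
have gphi : graded phi.
  by case: hG => hH _ _ _ _; case: (hH _ hphi).
exists a, b, (M phi); split; first by split.
rewrite !compX et tn0 tn1 tn2 tn3; split => //.
- by have := Mdec 0 gphi; rewrite sum2 w20 w21.
- by have := Mdec 1 gphi; rewrite sum2 w20 w21.
Qed.
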